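(* Let $\epsilon\in(0,0.01)$. There is a constant $c$ such that for all integers $k,m$ with $m\ge(\tfrac{1}{32\epsilon^2}-1)k\ge0$ and $k+m>0$, setting $\gamma=k+m$ and $$\xi_{k,m}(z)=\Big(\frac{1}{k!}\Big)^{1/2}\Big(\frac{\gamma}{2}\Big)^{\frac{k+1}{2}}\frac{z^k}{\sqrt\pi}\exp\Big(-\frac{\gamma}{4}|z|^2\Big),\qquad z\in\mathbb C,$$ one has $|\xi_{k,m}(z)|^2\le c\exp(-\tfrac{\gamma}{c}|z|^2)$ for every $z$ with $|z|\ge 9\epsilon$. *)

(* Defs.v *)
From Stdlib Require Import Reals.
From Coquelicot Require Import Coquelicot.
Open Scope R_scope.

Definition gam (k m : nat) : R := INR k + INR m.

Definition xi (k m : nat) (z : C) : C :=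
  Cmult
    (RtoC (sqrt (/ INR (Factorial.fact k)) * Rpower (gam k m / 2) ((INR k + 1) / 2)
           / sqrt PI * exp (- (gam k m / 4) * (Cmod z) ^ 2)))
    (Cpow z k).

(* Main.v *)
Require Import Defs.
From Stdlib Require Import Reals Lra Lia.
From Coquelicot Require Import Coquelicot.
Open Scope R_scope.

Lemma tay (x : R) (n : nat) : 0 <= x -> x ^ n / INR (Factorial.fact n) <= exp x.
Proof.
  intro Hx. eapply Rle_trans; [| apply (exp_ge_taylor x n Hx)].
  assert (Hp : forall i, 0 <= x ^ i / INR (Factorial.fact i)).
  { intro i. apply Rdiv_le_0_compat. apply pow_le; auto.
    apply lt_0_INR. apply Factorial.lt_O_fact. }
  destruct n as [|n].
  - simpl. lra.
  - rewrite tech5. pose proof (cond_pos_sum _ n Hp). lra.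
Qed.

Lemma exp_le_exp' (x y : R) : x <= y -> exp x <= exp y.
Proof. intro H. destruct H as [H|H]; [left; apply exp_increasing; exact H| rewrite H; lra]. Qed.

Lemma exp_pow_nat (a : R) (k : nat) : exp a ^ k = exp (INR k * a).
Proof.
  induction k as [|k IH].
  - simpl. rewrite Rmult_0_l, exp_0. reflexivity.
  - rewrite S_INR. simpl. rewrite IH, <- exp_plus. f_equal. ring.
Qed.

Lemma modxi (k m : nat) (z : C) : (0 < gam k m) ->
  (Cmod (xi k m z)) ^ 2 =
  (gam k m / 2) * (gam k m * Cmod z ^ 2 / 2) ^ k / INR (Factorial.fact k) / PI
   * exp (- (gam k m * Cmod z ^ 2 / 2)).
Proof.
  intro Hg. unfold xi. rewrite Cmod_mult, Cmod_R, Cmod_pow.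
  rewrite Rpow_mult_distr, pow2_abs.
  set (g := gam k m). set (r := Cmod z).
  assert (Hf : 0 < INR (Factorial.fact k)) by (apply lt_0_INR; apply Factorial.lt_O_fact).
  assert (HP : 0 < PI) by apply PI_RGT_0.
  set (S1 := sqrt (/ INR (Factorial.fact k))).
  set (P := Rpower (g / 2) ((INR k + 1) / 2)).
  set (S2 := sqrt PI). set (E := exp (- (g / 4) * r ^ 2)).
  assert (H1 : S1 ^ 2 = / INR (Factorial.fact k)).
  { apply pow2_sqrt. left; apply Rinv_0_lt_compat; exact Hf. }
  assert (H2 : S2 ^ 2 = PI) by (apply pow2_sqrt; lra).
  assert (HS2 : 0 < S2) by (apply sqrt_lt_R0; lra).
  assert (H3 : P ^ 2 = (g/2) ^ (S k)).
  { replace (P ^ 2) with (P * P) by ring. unfold P. rewrite <- Rpower_plus.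
    replace ((INR k + 1) / 2 + (INR k + 1) / 2) with (INR (S k)) by (rewrite S_INR; field).
    rewrite Rpower_pow; auto. apply Rdiv_lt_0_compat; [exact Hg|lra]. }
  assert (H4 : E ^ 2 = exp (- (g * r ^ 2 / 2))).
  { replace (E ^ 2) with (E * E) by ring. unfold E. rewrite <- exp_plus. f_equal. field. }
  replace ((S1 * P / S2 * E) ^ 2) with (S1 ^ 2 * P ^ 2 / S2 ^ 2 * E ^ 2) by (field; apply Rgt_not_eq; lra).
  rewrite H1, H2, H3, H4.
  replace ((g * r^2/2)^k) with ((g/2)^k * (r^2)^k) by (rewrite <- Rpow_mult_distr; f_equal; field).
  replace ((r^k)^2) with ((r^2)^k) by (rewrite <- !pow_mult; f_equal; lia).
  change ((g/2)^S k) with ((g/2)*(g/2)^k).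
  field. split; apply Rgt_not_eq; lra.
Qed.

Theorem lemma5p9 (eps : R) (Heps : 0 < eps < 1 / 100) :
  exists c : R, 0 < c /\
    forall k m : nat,
      (1 / (32 * eps ^ 2) - 1) * INR k <= INR m ->
      (0 < k + m)%nat ->
      forall z : C, 9 * eps <= Cmod z ->
        (Cmod (xi k m z)) ^ 2 <= c * exp (- (gam k m / c) * (Cmod z) ^ 2).
Proof.
  assert (He2 : 0 < eps ^ 2) by (apply pow_lt; lra).
  assert (He2s : eps ^ 2 < 1 / 10000) by (simpl; nra).
  set (c := 400 / (81 * eps ^ 2)).
  assert (Hc : 0 < c) by (unfold c; apply Rdiv_lt_0_compat; lra).
  assert (Hgc : forall g, 0 <= g -> g / c = g * (81 * eps ^ 2) / 400)
    by (intros; unfold c; field; repeat split; apply Rgt_not_eq; lra).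
  exists c. split; [exact Hc|].
  intros k m Hkm Hpos z Hz.
  assert (Hg : 0 < gam k m).
  { unfold gam. rewrite <- plus_INR. apply lt_0_INR. exact Hpos. }
  assert (HgKM : gam k m = INR k + INR m) by reflexivity.
  rewrite modxi by exact Hg.
  rewrite (Hgc (gam k m)) by lra.
  set (g := gam k m) in *. set (r := Cmod z) in *. set (K := INR k) in *.
  set (t := g * r ^ 2 / 2).
  assert (HK0 : 0 <= K) by apply pos_INR.
  assert (HK : K <= 32 * eps ^ 2 * g).
  { assert (Ha : 32 * eps ^ 2 * (1 / (32 * eps ^ 2)) = 1) by (field; apply Rgt_not_eq; lra).
    pose proof (Rmult_le_compat_l (32 * eps ^ 2) _ _ ltac:(lra) Hkm) as H.
    rewrite HgKM. nra. }
  assert (Hr2 : 81 * eps ^ 2 <= r ^ 2) by (simpl; nra).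
  assert (Ht : 81 / 2 * eps ^ 2 * g <= t) by (unfold t; nra).
  assert (Ht0 : 0 <= t) by nra.
  assert (Hf : 0 < INR (Factorial.fact k)) by (apply lt_0_INR; apply Factorial.lt_O_fact).
  assert (HP : 1 < PI) by (pose proof PI2_1; lra).
  assert (Hb : t ^ k / INR (Factorial.fact k) <= exp (K / 9) * exp (9 / 10 * t)).
  { pose proof (tay (9 / 10 * t) k ltac:(lra)) as H.
    replace (t ^ k) with ((10 / 9) ^ k * (9 / 10 * t) ^ k)
      by (rewrite <- Rpow_mult_distr; f_equal; field).
    assert (H1 : (10 / 9) ^ k <= exp (K / 9)).
    { replace (K / 9) with (K * (1 / 9)) by field. unfold K. rewrite <- exp_pow_nat.
      apply pow_incr. pose proof (exp_ineq1 (1 / 9) ltac:(lra)). lra. }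
    assert (H2 : 0 <= (9 / 10 * t) ^ k / INR (Factorial.fact k))
      by (apply Rdiv_le_0_compat; [apply pow_le; lra | lra]).
    unfold Rdiv in *. rewrite Rmult_assoc.
    apply Rmult_le_compat; auto; [apply pow_le; lra]. }
  assert (Hexp1 : exp (K / 9) * exp (9 / 10 * t) * exp (- t) <= exp (- (t / 200)) * exp (- (t / 200))).
  { rewrite <- !exp_plus. apply exp_le_exp'. lra. }
  set (E := exp (- (t / 200))) in *.
  assert (HE : 0 < E) by apply exp_pos.
  assert (HgE : g * E <= c).
  { pose proof (exp_ineq1 (t / 200) ltac:(nra)) as H1.
    assert (H2 : exp (t / 200) * E = 1) by (unfold E; rewrite <- exp_plus; replace (t/200 + - (t/200)) with 0 by ring; apply exp_0).
    assert (H3 : g <= c * exp (t / 200)).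
    { assert (H4 : c * (81 * eps ^ 2) = 400) by (unfold c; field; apply Rgt_not_eq; lra).
      nra. }
    nra. }
  assert (HE2 : E <= exp (- (g * (81 * eps ^ 2) / 400) * r ^ 2)).
  { apply exp_le_exp'. unfold t. assert (0 <= g * r ^ 2) by (apply Rmult_le_pos; [lra| apply pow2_ge_0]). nra. }
  assert (HX0 : 0 <= t ^ k / INR (Factorial.fact k) * exp (- t))
    by (apply Rmult_le_pos; [apply Rdiv_le_0_compat; [apply pow_le|]|left; apply exp_pos]; lra).
  assert (HX : t ^ k / INR (Factorial.fact k) * exp (- t) <= E * E).
  { eapply Rle_trans; [|exact Hexp1]. apply Rmult_le_compat_r; [left; apply exp_pos| exact Hb]. }
  replace (g / 2 * t ^ k / INR (Factorial.fact k) / PI * exp (- t))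
    with (g / (2 * PI) * (t ^ k / INR (Factorial.fact k) * exp (- t)))
    by (field; split; apply Rgt_not_eq; lra).
  assert (HPi : 0 < / (2 * PI) <= 1).
  { split. apply Rinv_0_lt_compat; lra. rewrite <- Rinv_1. apply Rinv_le_contravar; lra. }
  unfold Rdiv at 1. 
  apply Rle_trans with (g * / (2 * PI) * (E * E)).
  { apply Rmult_le_compat_l; [nra | exact HX]. }
  apply Rle_trans with (c * E); [|apply Rmult_le_compat_l; lra].
  assert (HgEn : 0 <= g * E) by nra.
  replace (g * / (2 * PI) * (E * E)) with (/ (2 * PI) * ((g * E) * E)) by ring.
  apply Rle_trans with (1 * (g * E * E)).
  { apply Rmult_le_compat_r; nra. }
  rewrite Rmult_1_l. apply Rmult_le_compat_r; lra.
Qed.
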